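(* Let $(M_1,f_1,g_1)$ be an $(m,n)$-hypermodule over a commutative Krasner $(m,n)$-hyperring $(R_1,f'_1,g'_1)$ and $(M_2,f_2,g_2)$ an $(m,n)$-hypermodule over a commutative Krasner $(m,n)$-hyperring $(R_2,f'_2,g'_2)$, both with scalar identity $1$, and consider the $(m,n)$-hypermodule $(M_1\times M_2,f_1\times f_2,g_1\times g_2)$ over $(R_1\times R_2,f'_1\times f'_2,g'_1\times g'_2)$. Let $\phi_1:\mathcal{SH}(M_1)\to\mathcal{SH}(M_1)\cup\{\varnothing\}$ and $\phi_2:\mathcal{SH}(M_2)\to\mathcal{SH}(M_2)\cup\{\varnothing\}$ be functions with $\phi_2(M_2)=M_2$. Then $Q_1\times M_2$ is an $n$-ary $\phi_1\times\phi_2$-classical prime subhypermodule of $M_1\times M_2$ if and only if $Q_1$ is an $n$-ary $\phi_1$-classical prime subhypermodule of $M_1$.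
   Context: A commutative Krasner $(m,n)$-hyperring with scalar identity $1$ is a triple $(R,f',g')$ where $(R,f')$ is a canonical $m$-ary hypergroup with zero $0$, $(R,g')$ is a commutative $n$-ary semigroup, $g'$ is distributive over $f'$, $0$ is a zero element for $g'$, and $g'(x,1^{(n-1)})=x$. Notation: $x_i^j$ denotes $x_i,\dots,x_j$ and $x^{(k)}$ denotes $x$ repeated $k$ times. An $(m,n)$-hypermodule over $R$ is a triple $(M,f,g)$ with $(M,f)$ a canonical $m$-ary hypergroup with zero $0$ and $g:R^{n-1}\times M\to P^*(M)$ satisfying: $g(r_1^{n-1},f(x_1^m))=f(g(r_1^{n-1},x_1),\dots,g(r_1^{n-1},x_m))$; $g(r_1^{i-1},f'(s_1^m),r_{i+1}^{n-1},x)=f(g(r_1^{i-1},s_1,r_{i+1}^{n-1},x),\dots,g(r_1^{i-1},s_m,r_{i+1}^{n-1},x))$; $g(r_1^{i-1},g'(r_i^{i+n-1}),r_{i+n}^{2n-2},x)=g(r_1^{n-1},g(r_n^{2n-2},x))$; $g(r_1^{i-1},0,r_{i+1}^{n-1},x)=\{0\}$; moreover $g(1^{(n-1)},a)=\{a\}$. A subhypermodule is a nonempty $N\subseteq M$ with $(N,f)$ an $m$-ary subhypergroup and $g(R^{(n-1)},N)\subseteq N$; $\mathcal{SH}(M)$ is the set of subhypermodules. The product hyperring has componentwise operations, with identity $(1,1)$. On $M_1\times M_2$: $f_1\times f_2((a_1,b_1),\dots,(a_m,b_m))=\{(x_1,x_2):x_1\in f_1(a_1^m),x_2\in f_2(b_1^m)\}$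 and $g_1\times g_2((r_1,s_1),\dots,(r_{n-1},s_{n-1}),(a,b))=\{(y_1,y_2):y_1\in g_1(r_1^{n-1},a),y_2\in g_2(s_1^{n-1},b)\}$. The function $\phi_1\times\phi_2$ is defined on product subhypermodules by $(\phi_1\times\phi_2)(K_1\times K_2)=\phi_1(K_1)\times\phi_2(K_2)$. Given a function $\phi$ on subhypermodules of an $(m,n)$-hypermodule with external operation $g$, a proper subhypermodule $Q$ is $n$-ary $\phi$-classical prime if $g(r_1^{n-1},a)\subseteq Q\setminus\phi(Q)$ implies $g(r_i,1^{(n-2)},a)\subseteq Q$ for some $1\le i\le n-1$ (for $M_1\times M_2$, $1$ is $(1,1)$). *)

(* Defs.v *)
From mathcomp Require Import ssreflect ssrfun ssrbool eqtype ssrnat seq.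
From Stdlib Require Import Permutation.
Set Implicit Arguments. Unset Strict Implicit. Unset Printing Implicit Defensive.

Definition hset (T : Type) := T -> Prop.
Definition sing (T : Type) (x : T) : hset T := fun y => y = x.
Definition setTh (T : Type) : hset T := fun _ => True.
Definition set0h (T : Type) : hset T := fun _ => False.

Fixpoint allin (T : Type) (xs : seq T) (As : seq (hset T)) : Prop :=
  match xs, As with
  | [::], [::] => True
  | x :: xs', A :: As' => A x /\ allin xs' As'
  | _, _ => False
  end.

Definition hlift (T : Type) (f : seq T -> hset T) (As : seq (hset T)) : hset T :=
  fun z => exists xs, allin xs As /\ f xs z.

Record canonical_hypergroup (m : nat) (T : Type) (f : seq T -> hset T)
   (z : T) (neg : T -> T) : Prop := {
  hg_nonempty : forall xs, size xs = m -> exists y, f xs y;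
  hg_assoc : forall xs i j, size xs = (2 * m).-1 -> i < m -> j < m ->
     hlift f (map (@sing T) (take i xs) ++ f (take m (drop i xs)) :: map (@sing T) (drop (i + m) xs))
   = hlift f (map (@sing T) (take j xs) ++ f (take m (drop j xs)) :: map (@sing T) (drop (j + m) xs));
  hg_reprod : forall xs i, size xs = m -> i < m ->
     hlift f (map (@sing T) (take i xs) ++ @setTh T :: map (@sing T) (drop i.+1 xs)) = @setTh T;
  hg_comm : forall xs ys, size xs = m -> Permutation xs ys -> f xs = f ys;
  hg_zero : forall x, f (x :: nseq m.-1 z) = sing x;
  hg_zero_uniq : forall e, (forall x, f (x :: nseq m.-1 e) = sing x) -> e = z;
  hg_inv : forall x, f (x :: neg x :: nseq (m - 2) z) z;
  hg_inv_uniq : forall x y, f (x :: y :: nseq (m - 2) z) z -> y = neg x;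
  hg_rev : forall xs x i, size xs = m -> f xs x -> i < m ->
     f (map neg (take i xs) ++ x :: map neg (drop i.+1 xs)) (nth z xs i)
}.

Record KrasnerHyperring (m n : nat) := {
  kr_car :> Type;
  kr_f : seq kr_car -> hset kr_car;
  kr_g : seq kr_car -> kr_car;
  kr_zero : kr_car;
  kr_one : kr_car;
  kr_neg : kr_car -> kr_car;
  kr_hg : canonical_hypergroup m kr_f kr_zero kr_neg;
  kr_g_assoc : forall xs i j, size xs = (2 * n).-1 -> i < n -> j < n ->
     kr_g (take i xs ++ kr_g (take n (drop i xs)) :: drop (i + n) xs)
   = kr_g (take j xs ++ kr_g (take n (drop j xs)) :: drop (j + n) xs);
  kr_g_comm : forall xs ys, size xs = n -> Permutation xs ys -> kr_g xs = kr_g ys;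
  kr_distr : forall xs as_ i, size xs = n -> size as_ = m -> i < n ->
     (fun w => exists y, kr_f as_ y /\ w = kr_g (take i xs ++ y :: drop i.+1 xs))
   = kr_f (map (fun a => kr_g (take i xs ++ a :: drop i.+1 xs)) as_);
  kr_g_zero : forall xs i, size xs = n -> i < n ->
     kr_g (take i xs ++ kr_zero :: drop i.+1 xs) = kr_zero;
  kr_g_one : forall x, kr_g (x :: nseq n.-1 kr_one) = x
}.

Record Hypermodule (m n : nat) (R : KrasnerHyperring m n) := {
  hm_car :> Type;
  hm_f : seq hm_car -> hset hm_car;
  hm_g : seq R -> hm_car -> hset hm_car;
  hm_zero : hm_car;
  hm_neg : hm_car -> hm_car;
  hm_hg : canonical_hypergroup m hm_f hm_zero hm_neg;
  hm_g_nonempty : forall rs x, size rs = n.-1 -> exists y, hm_g rs x y;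
  hm_ax1 : forall rs xs, size rs = n.-1 -> size xs = m ->
     (fun w => exists y, hm_f xs y /\ hm_g rs y w) = hlift hm_f (map (hm_g rs) xs);
  hm_ax2 : forall rs ss i x, size rs = n.-1 -> size ss = m -> i < n.-1 ->
     (fun w => exists s, kr_f ss s /\ hm_g (take i rs ++ s :: drop i.+1 rs) x w)
   = hlift hm_f (map (fun s => hm_g (take i rs ++ s :: drop i.+1 rs) x) ss);
  hm_ax3 : forall rs i x, size rs = (2 * n - 2) -> i < n.-1 ->
     hm_g (take i rs ++ kr_g (take n (drop i rs)) :: drop (i + n) rs) x
   = (fun w => exists y, hm_g (drop n.-1 rs) x y /\ hm_g (take n.-1 rs) y w);
  hm_ax4 : forall rs i x, size rs = n.-1 -> i < n.-1 ->
     hm_g (take i rs ++ kr_zero R :: drop i.+1 rs) x = sing hm_zero;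
  hm_one : forall a, hm_g (nseq n.-1 (kr_one R)) a = sing a
}.

Definition subhypermodule (m n : nat) (R M : Type) (f : seq M -> hset M)
  (g : seq R -> M -> hset M) (N : hset M) : Prop :=
  (exists x, N x) /\
  (forall xs, size xs = m -> allin xs (nseq m N) -> forall w, f xs w -> N w) /\
  (forall xs i, size xs = m -> allin xs (nseq m N) -> i < m -> forall w, N w ->
      hlift f (map (@sing M) (take i xs) ++ N :: map (@sing M) (drop i.+1 xs)) w) /\
  (forall rs x w, size rs = n.-1 -> N x -> g rs x w -> N w).

Definition classical_prime (m n : nat) (R M : Type) (one : R) (f : seq M -> hset M)
  (g : seq R -> M -> hset M) (phi : hset M -> hset M) (Q : hset M) : Prop :=
  subhypermodule m n f g Q /\ Q <> @setTh M /\
  forall rs a, size rs = n.-1 ->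
    (forall w, g rs a w -> Q w /\ ~ phi Q w) ->
    exists i, i < n.-1 /\ forall w, g (nth one rs i :: nseq (n - 2) one) a w -> Q w.

Definition prod_f (A B : Type) (f1 : seq A -> hset A) (f2 : seq B -> hset B)
  : seq (A * B) -> hset (A * B) :=
  fun xs p => f1 (map fst xs) p.1 /\ f2 (map snd xs) p.2.

Definition prod_g (R1 R2 A B : Type) (g1 : seq R1 -> A -> hset A)
  (g2 : seq R2 -> B -> hset B) : seq (R1 * R2) -> A * B -> hset (A * B) :=
  fun rs x p => g1 (map fst rs) x.1 p.1 /\ g2 (map snd rs) x.2 p.2.

(* (phi1 x phi2)(K1 x K2) = phi1 K1 x phi2 K2, K1 and K2 recovered as projections *)
Definition prod_phi (A B : Type) (phi1 : hset A -> hset A) (phi2 : hset B -> hset B)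
  : hset (A * B) -> hset (A * B) :=
  fun K p => phi1 (fun a => exists b, K (a, b)) p.1 /\ phi2 (fun b => exists a, K (a, b)) p.2.

Definition setX_h (A B : Type) (K1 : hset A) (K2 : hset B) : hset (A * B) :=
  fun p => K1 p.1 /\ K2 p.2.

Arguments kr_f {m n} k _ _.
Arguments kr_g {m n} k _.
Arguments kr_zero {m n} k.
Arguments kr_neg {m n} k _.
Arguments hm_f {m n R} h _ _.
Arguments hm_g {m n R} h _ _ _.
Arguments hm_zero {m n R} h.
Arguments hm_neg {m n R} h _.

(* Main.v *)
From Stdlib Require Import FunctionalExtensionality PropExtensionality.
Require Import Defs.
From mathcomp Require Import ssreflect ssrfun ssrbool eqtype ssrnat seq.

Set Implicit Arguments. Unset Strict Implicit.

Lemma allin_shape (T : Type) (A : hset T) (l1 l2 ys : seq T) :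
  allin ys (map (@sing T) l1 ++ A :: map (@sing T) l2) <->
  exists y, A y /\ ys = l1 ++ y :: l2.
Proof.
elim: l1 ys => [|x l1 IH] [|y ys] /=.
- by split=> // -[y [_ H]]; discriminate H.
- split.
  + move=> [Ay H]; exists y; split=> //; congr (_ :: _).
    elim: l2 ys H => [|z l2 IH2] [|u us] //= [-> /IH2 ->] //.
  + move=> [y' [Ay' [-> ->]]]; split=> //.
    by elim: l2 => //= z l2 ->.
- by split=> // -[y [_ H]]; discriminate H.
- rewrite IH; split.
  + by move=> [-> [y' [Ay' ->]]]; exists y'.
  + by move=> [y' [Ay' [-> ->]]]; split=> //; exists y'.
Qed.

Lemma allin_nseq_fst (A B : Type) (Q : hset A) (xs : seq (A * B)) k :
  allin xs (nseq k (setX_h Q (@setTh B))) -> allin (map fst xs) (nseq k Q) /\ size xs = k.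
Proof.
elim: k xs => [|k IH] [|x xs] //= [[H1 _] H2].
by have [? ->] := IH _ H2.
Qed.

Lemma allin_nseq_size (A : Type) (Q : hset A) (xs : seq A) k :
  allin xs (nseq k Q) -> size xs = k.
Proof. by elim: k xs => [|k IH] [|x xs] //= [_ /IH ->]. Qed.

Lemma allin_nseq_zip (A B : Type) (Q : hset A) (xs : seq A) (ys : seq B) k :
  allin xs (nseq k Q) -> size ys = k -> allin (zip xs ys) (nseq k (setX_h Q (@setTh B))).
Proof.
elim: k xs ys => [|k IH] [|x xs] [|y ys] //= [H1 H2] [H3]; split=> //.
exact: IH.
Qed.

Lemma allin_nseq_of_fst (A B : Type) (Q : hset A) (xs : seq (A * B)) k :
  allin (map fst xs) (nseq k Q) -> allin xs (nseq k (setX_h Q (@setTh B))).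
Proof.
by elim: k xs => [|k IH] [|x xs] //= [H1 H2]; split=> //; apply: IH.
Qed.

Lemma map_fst_zip (A B : Type) (xs : seq A) (ys : seq B) :
  size xs = size ys -> map fst (zip xs ys) = xs.
Proof. by elim: xs ys => [|x xs IH] [|y ys] //= [/IH ->]. Qed.

Lemma map_snd_zip (A B : Type) (xs : seq A) (ys : seq B) :
  size xs = size ys -> map snd (zip xs ys) = ys.
Proof. by elim: xs ys => [|x xs IH] [|y ys] //= [/IH ->]. Qed.

Section Sub.
Variables (m n : nat) (hm : 2 <= m) (hn : 2 <= n)
  (R1 R2 : KrasnerHyperring m n) (M1 : Hypermodule R1) (M2 : Hypermodule R2).

Lemma sub_equiv (Q1 : hset M1) :
  subhypermodule m n (prod_f (hm_f M1) (hm_f M2)) (prod_g (hm_g M1) (hm_g M2))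
     (setX_h Q1 (@setTh M2))
  <-> subhypermodule m n (hm_f M1) (hm_g M1) Q1.
Proof.
split.
- move=> [[x [Hx _]] [C2 [C3 C4]]]; split; first by exists x.1.
  split; [|split].
  + move=> xs sz Hall w Hw.
    have [w2 Hw2] := hg_nonempty (hm_hg M2) (size_nseq m (hm_zero M2)).
    have szz : size xs = size (nseq m (hm_zero M2)) by rewrite size_nseq.
    have := C2 (zip xs (nseq m (hm_zero M2))) _ _ (w, w2).
    case => //.
    * by rewrite size_zip sz size_nseq minnn.
    * by apply: allin_nseq_zip=> //; rewrite size_nseq.
    * by rewrite /prod_f map_fst_zip // map_snd_zip.
  + move=> xs i sz Hall lt w Hw.
    have szz : size xs = size (nseq m (hm_zero M2)) by rewrite size_nseq.
    set xs' := zip xs (nseq m (hm_zero M2)).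
    have := C3 xs' i _ _ lt (w, hm_zero M2) (conj Hw I).
    case.
    * by rewrite size_zip sz size_nseq minnn.
    * by apply: allin_nseq_zip=> //; rewrite size_nseq.
    move=> ys [/allin_shape [y [[Qy _] ->]] [Hf _]].
    exists (take i xs ++ y.1 :: drop i.+1 xs); split.
    * by apply/allin_shape; exists y.1.
    * move: Hf; rewrite /prod_f map_cat /= map_take map_drop /xs' map_fst_zip //.
  + move=> rs x0 w sz Qx Hg.
    have [w2 Hw2] := @hm_g_nonempty _ _ _ M2 (nseq n.-1 (kr_one R2)) (hm_zero M2) (size_nseq _ _).
    have szz : size rs = size (nseq n.-1 (kr_one R2)) by rewrite size_nseq.
    have := C4 (zip rs (nseq n.-1 (kr_one R2))) (x0, hm_zero M2) (w, w2).
    case => //.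
    * by rewrite size_zip sz size_nseq minnn.
    * by rewrite /prod_g map_fst_zip // map_snd_zip.
- move=> [[x Hx] [C2 [C3 C4]]]; split; first by exists (x, hm_zero M2).
  split; [|split].
  + move=> xs sz Hall w [Hw1 _]; split=> //.
    have [H1 _] := allin_nseq_fst Hall.
    by apply: (C2 (map fst xs)) => //; rewrite size_map.
  + move=> xs i sz Hall lt w [Hw _].
    have [H1 _] := allin_nseq_fst Hall.
    have := C3 (map fst xs) i _ H1 lt w.1 Hw.
    rewrite size_map => /(_ sz) [ys1 [/allin_shape [y1 [Qy1 ->]] Hf1]].
    have := @hg_reprod _ _ _ _ _ (hm_hg M2) (map snd xs) i.
    rewrite size_map => /(_ sz lt) E.
    have := equal_f E w.2; rewrite /setTh => E2.
    have : hlift (hm_f M2) (map (@sing M2) (take i (map snd xs)) ++ (fun=> True)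
       :: map (@sing M2) (drop i.+1 (map snd xs))) w.2 by rewrite E2.
    move=> [ys2 [/allin_shape [y2 [_ ->]] Hf2]].
    exists (take i xs ++ (y1, y2) :: drop i.+1 xs); split.
    * by apply/allin_shape; exists (y1, y2).
    * by rewrite /prod_f !map_cat /= !map_take !map_drop.
  + move=> rs x' w sz [Qx _] [Hg _]; split=> //.
    by apply: (C4 (map fst rs) x'.1) => //; rewrite size_map.
Qed.

End Sub.
Unset Implicit Arguments.

Theorem mainTheorem18 (m n : nat) (hm : 2 <= m) (hn : 2 <= n)
  (R1 R2 : KrasnerHyperring m n) (M1 : Hypermodule R1) (M2 : Hypermodule R2)
  (phi1 : hset M1 -> hset M1) (phi2 : hset M2 -> hset M2)
  (Hphi1 : forall K, subhypermodule m n (hm_f M1) (hm_g M1) K ->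
             subhypermodule m n (hm_f M1) (hm_g M1) (phi1 K) \/ phi1 K = @set0h M1)
  (Hphi2 : forall K, subhypermodule m n (hm_f M2) (hm_g M2) K ->
             subhypermodule m n (hm_f M2) (hm_g M2) (phi2 K) \/ phi2 K = @set0h M2)
  (Hphi2M : phi2 (@setTh M2) = @setTh M2)
  (Q1 : hset M1) :
  classical_prime m n (kr_one R1, kr_one R2)
      (prod_f (hm_f M1) (hm_f M2)) (prod_g (hm_g M1) (hm_g M2))
      (prod_phi phi1 phi2) (setX_h Q1 (@setTh M2))
  <-> classical_prime m n (kr_one R1) (hm_f M1) (hm_g M1) phi1 Q1.
Proof.
have Pchar : (exists x, Q1 x) -> forall w,
    prod_phi phi1 phi2 (setX_h Q1 (@setTh M2)) w <-> phi1 Q1 w.1.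
  move=> [x Qx] w; rewrite /prod_phi.
  have -> : (fun a => exists b, setX_h Q1 (@setTh M2) (a, b)) = Q1.
    apply: functional_extensionality => a; apply: propositional_extensionality.
    split; first by case=> b [].
    by move=> Qa; exists (hm_zero M2).
  have -> : (fun b => exists a, setX_h Q1 (@setTh M2) (a, b)) = @setTh M2.
    apply: functional_extensionality => b; apply: propositional_extensionality.
    by split=> // _; exists x.
  by rewrite Hphi2M; split=> // -[].
have hn1 : (1 + (n - 2) = n.-1)%N by move: hn; clear; case: n => [|[|k]] //= _; rewrite subn2.
split.
- move=> [Hs [Hne Hp]].
  have Hs1 := (proj1 (sub_equiv (M1:=M1) M2 Q1) Hs).
  have Hex := proj1 Hs1.
  split=> //; split.
    move=> E; apply: Hne; rewrite E.
    apply: functional_extensionality => p; apply: propositional_extensionality.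
    by split.
  move=> rs a sz H.
  have szz : size rs = size (nseq n.-1 (kr_one R2)) by rewrite size_nseq.
  have := Hp (zip rs (nseq n.-1 (kr_one R2))) (a, hm_zero M2).
  case.
  + by rewrite size_zip sz size_nseq minnn.
  + move=> w [Hg _]; move: Hg; rewrite map_fst_zip // => /H [Q NP].
    by split=> //; rewrite Pchar.
  move=> i [lt Hi]; exists i; split=> //.
  move=> w Hw.
  have [w2 Hw2] := @hm_g_nonempty _ _ _ M2 (map snd (nth (kr_one R1, kr_one R2)
     (zip rs (nseq n.-1 (kr_one R2))) i :: nseq (n - 2) (kr_one R1, kr_one R2))) (hm_zero M2)
     ltac:(by rewrite size_map /= size_nseq).
  have := Hi (w, w2); case => //; split => //=.
  by rewrite map_nseq nth_zip //= nth_nseq ltn_neqAle.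
- move=> [Hs [Hne Hp]].
  have Hex := proj1 Hs.
  split; first by apply/(sub_equiv (M1:=M1) M2 Q1).
  split.
    move=> E; apply: Hne.
    apply: functional_extensionality => a; apply: propositional_extensionality.
    split=> // _.
    have : setX_h Q1 (@setTh M2) (a, hm_zero M2) by rewrite E.
    by case.
  move=> rs a sz H.
  have := Hp (map fst rs) a.1; case.
  + by rewrite size_map.
  + move=> w1 Hw1.
    have [w2 Hw2] := @hm_g_nonempty _ _ _ M2 (map snd rs) a.2 ltac:(by rewrite size_map).
    have [[Q _] NP] := H (w1, w2) (conj Hw1 Hw2).
    by split=> // P; apply: NP; rewrite Pchar.
  move=> i [lt Hi]; exists i; split=> //.
  move=> w [Hw _]; split=> //; apply: Hi.
  move: Hw; rewrite /= map_nseq /=.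
  by rewrite (nth_map (kr_one R1, kr_one R2)) // sz.
Qed.
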